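(* (i) There exist quantum programs $P_1,P_2$ and projective predicates $A,B$ such that $\models_P P_1\sim P_2:A\Rightarrow B$ holds but $\models_S P_1\sim P_2:A\Rightarrow B$ does not. (ii) There exist quantum programs $P_1,P_2$ and projective predicates $A,B$ such that $\models_S P_1\sim P_2:A\Rightarrow B$ holds but $\models_P P_1\sim P_2:A\Rightarrow B$ does not. (iii) For all quantum programs $P_1,P_2$ and quantum predicates $A,B$, if $\models P_1\sim P_2:A\Rightarrow B$ then $\models_S P_1\sim P_2:A\Rightarrow B$. (iv) There exist quantum programs $P_1,P_2$ and quantum predicates $A,B$ such that $\models_S P_1\sim P_2:A\Rightarrow B$ holds but $\models P_1\sim P_2:A\Rightarrow B$ does not.
   Context: Quantum programs are those of the quantum while-language ($\mathbf{skip}$, $q:=|0\rangle$, $\bar q:=U[\bar q]$, sequencing, measurement-guarded case statements and while loops); each program $P$ has finite-dimensional state space $\mathcal{H}_P$ and denotational semantics $\llbracket P\rrbracket$, a quantum operation on $\mathcal{D}^\le(\mathcal{H}_P)$ (e.g. $\llbracket\mathbf{skip}\rrbracket$ is the identity, $\llbracket q:=|0\rangle\rrbracket(\rho)=\sum_i|0\rangle\langle i|\rho|i\rangle\langle 0|$, $\llbracket \bar q:=U[\bar q]\rrbracket(\rho)=U\rho U^\dagger$). Variables of $P_1,P_2$ are disjoint copies; predicates live on $\mathcal{H}_{P_1}\otimes\mathcal{H}_{P_2}$. A quantum predicate is a Hermitian $A$ with $0\sqsubseteq A\sqsubseteq I$; a projective predicate is a projection. Coupling: $\sigma$ couples $\langle\rho_1,\rho_2\rangle$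 if $\mathrm{tr}_2\sigma=\rho_1$, $\mathrm{tr}_1\sigma=\rho_2$; lifting $\rho_1A^\#\rho_2$: some coupling has support in $A$. Validity $\models P_1\sim P_2:A\Rightarrow B$: for every $\rho\in\mathcal{D}^\le(\mathcal{H}_{P_1}\otimes\mathcal{H}_{P_2})$ there is a coupling $\sigma$ for $\langle\llbracket P_1\rrbracket(\mathrm{tr}_2\rho),\llbracket P_2\rrbracket(\mathrm{tr}_1\rho)\rangle$ with $\mathrm{tr}(A\rho)\le\mathrm{tr}(B\sigma)+\mathrm{tr}(\rho)-\mathrm{tr}(\sigma)$. Validity with separable inputs $\models_S$: the same, but quantifying only over $\rho$ separable between $\mathcal{H}_{P_1}$ and $\mathcal{H}_{P_2}$ (i.e. $\rho=\sum_m\rho_{m1}\otimes\rho_{m2}$ with $\rho_{mi}$ positive). Projective validity $\models_P$: for all $\rho_1,\rho_2$ with $\rho_1A^\#\rho_2$, $\llbracket P_1\rrbracket(\rho_1)B^\#\llbracket P_2\rrbracket(\rho_2)$. *)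

(* Defs.v *)
From HB Require Import structures.
From mathcomp Require Import all_boot all_order all_algebra.
From mathcomp Require Import complex.
From mathcomp Require Import boolp classical_sets reals topology normedtype sequences.
Set Implicit Arguments. Unset Strict Implicit. Unset Printing Implicit Defensive.
Import Order.TTheory GRing.Theory Num.Theory numFieldNormedType.Exports.
Local Open Scope ring_scope.

Section Quantum.
Variable R : realType.
Local Notation C := (R[i]).

(** Operators on the finite-dimensional Hilbert space with orthonormal basis S
    (the space of functions S -> C), given by their matrix entries. *)
Definition op (S : finType) := S -> S -> C.
Definition vec (S : finType) := S -> C.

Section Ops.
Variable S : finType.
Implicit Types (A B : op S) (v : vec S).
Definition opmul A B : op S := fun s t => \sum_u A s u * B u t.
Definition opadj A : op S := fun s t => (A t s)^*%C.
Definition opadd A B : op S := fun s t => A s t + B s t.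
Definition opsub A B : op S := fun s t => A s t - B s t.
Definition opid : op S := fun s t => (s == t)%:R.
Definition op0 : op S := fun _ _ => 0.
Definition optr A : C := \sum_s A s s.
Definition opapp A v : vec S := fun s => \sum_t A s t * v t.
Definition psd A : Prop := forall v : vec S, 0 <= \sum_s (v s)^*%C * opapp A v s.
Definition hermitian A : Prop := forall s t, A s t = (A t s)^*%C.
Definition lowner A B : Prop := psd (opsub B A).
Definition qpredicate A : Prop := hermitian A /\ lowner op0 A /\ lowner A opid.
Definition projection A : Prop := hermitian A /\ opmul A A = A.
Definition pdensity A : Prop := psd A /\ optr A <= 1.
Definition unitary A : Prop := opmul (opadj A) A = opid.
Definition sandwich (M : op S) (rho : op S) : op S := opmul (opmul M rho) (opadj M).
Definition oplim (u : nat -> op S) : op S :=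
  fun s t => ((limn (fun N => complex.Re (u N s t))) +i* (limn (fun N => complex.Im (u N s t))))%C.
End Ops.
Arguments opid {S}.
Arguments op0 {S}.

Section Tensor.
Variables S1 S2 : finType.
Definition optensor (A : op S1) (B : op S2) : op (prod S1 S2) :=
  fun p q => A p.1 q.1 * B p.2 q.2.
Definition ptr2 (r : op (prod S1 S2)) : op S1 := fun s t => \sum_u r (s, u) (t, u).
Definition ptr1 (r : op (prod S1 S2)) : op S2 := fun s t => \sum_u r (u, s) (u, t).
Definition separable (r : op (prod S1 S2)) : Prop :=
  exists l : seq (op S1 * op S2),
    (forall x, x \in l -> psd x.1 /\ psd x.2) /\
    r = (fun p q => \sum_(x <- l) optensor x.1 x.2 p q).
Definition coupling (sigma : op (prod S1 S2)) (rho1 : op S1) (rho2 : op S2) : Prop :=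
  psd sigma /\ ptr2 sigma = rho1 /\ ptr1 sigma = rho2.
(** the support (range) of sigma is contained in the subspace (projection) A *)
Definition supp_in (sigma A : op (prod S1 S2)) : Prop :=
  forall v, opapp A (opapp sigma v) = opapp sigma v.
Definition lifting (rho1 : op S1) (A : op (prod S1 S2)) (rho2 : op S2) : Prop :=
  exists sigma, coupling sigma rho1 rho2 /\ supp_in sigma A.
End Tensor.

Section Lang.
Variables (n : nat) (d : 'I_n -> nat).
(** variables are 'I_n; variable i has state space of dimension (d i).+1;
    computational basis of H_P: assignments of a basis index to every variable *)
Definition st := {dffun forall i : 'I_n, 'I_(d i).+1}.
Definition lst k (qs : k.-tuple 'I_n) := {dffun forall j : 'I_k, 'I_(d (tnth qs j)).+1}.
Definition restr k (qs : k.-tuple 'I_n) (s : st) : lst qs :=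
  @finfun _ (fun j : 'I_k => 'I_(d (tnth qs j)).+1) (fun j => s (tnth qs j)).
(** M ⊗ I : operator M on H_qs extended by the identity on the other variables *)
Definition liftop k (qs : k.-tuple 'I_n) (M : op (lst qs)) : op st :=
  fun s t => [forall i, (i \notin qs) ==> (s i == t i)]%:R * M (restr qs s) (restr qs t).
(** |0><i| on variable q, tensored with identity *)
Definition resetK (q : 'I_n) (i : 'I_(d q).+1) : op st :=
  fun s t => [&& [forall j, (j != q) ==> (s j == t j)],
                 (s q == 0 :> nat) & (t q == i :> nat)]%:R.

Inductive prog : Type :=
| PSkip
| PInit (q : 'I_n)
| PUnit (k : nat) (qs : k.-tuple 'I_n) (U : op (lst qs))
| PSeq (P1 P2 : prog)
| PCase (k : nat) (qs : k.-tuple 'I_n) (m : nat)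
        (M : 'I_m -> op (lst qs)) (Ps : 'I_m -> prog)
| PWhile (k : nat) (qs : k.-tuple 'I_n)
         (M0 M1 : op (lst qs)) (body : prog).

Fixpoint wf (P : prog) : Prop :=
  match P with
  | PSkip => True
  | PInit _ => True
  | PUnit _ qs U => uniq qs /\ unitary U
  | PSeq P1 P2 => wf P1 /\ wf P2
  | PCase _ qs m M Ps =>
      [/\ uniq qs, (fun s t => \sum_(j < m) opmul (opadj (M j)) (M j) s t) = opid
        & forall j, wf (Ps j)]
  | PWhile _ qs M0 M1 body =>
      [/\ uniq qs, opadd (opmul (opadj M0) M0) (opmul (opadj M1) M1) = opid & wf body]
  end.

Fixpoint sem (P : prog) (rho : op st) : op st :=
  match P with
  | PSkip => rho
  | PInit q => fun s t => \sum_(i < (d q).+1) sandwich (resetK i) rho s t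
  | PUnit _ qs U => sandwich (liftop U) rho
  | PSeq P1 P2 => sem P2 (sem P1 rho)
  | PCase _ qs m M Ps => fun s t => \sum_(j < m) sem (Ps j) (sandwich (liftop (M j)) rho) s t
  | PWhile _ qs M0 M1 body =>
      let F := fun r => sem body (sandwich (liftop M1) r) in
      oplim (fun N => fun s t => \sum_(j < N) sandwich (liftop M0) (iter j F rho) s t)
  end.
End Lang.

Record qprog := QProg {
  qp_n : nat;
  qp_d : 'I_qp_n -> nat;
  qp_cmd : prog qp_d;
  qp_wf : wf qp_cmd }.
Arguments qp_d : clear implicits.

Definition qstate (P : qprog) : finType := st (qp_d P).
Definition qsem (P : qprog) : op (qstate P) -> op (qstate P) := sem (qp_cmd P).
Arguments qsem : clear implicits.

Section Validity.
Variables (P1 P2 : qprog).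
Local Notation S := (prod (qstate P1) (qstate P2)).
Definition judgement_cond (A B rho : op S) : Prop :=
  exists sigma, coupling sigma (qsem P1 (ptr2 rho)) (qsem P2 (ptr1 rho)) /\
    optr (opmul A rho) <= optr (opmul B sigma) + optr rho - optr sigma.
Definition valid (A B : op S) : Prop :=
  forall rho, pdensity rho -> judgement_cond A B rho.
Definition svalid (A B : op S) : Prop :=
  forall rho, pdensity rho -> separable rho -> judgement_cond A B rho.
Definition pvalid (A B : op S) : Prop :=
  forall rho1 rho2, pdensity rho1 -> pdensity rho2 -> lifting rho1 A rho2 ->
    lifting (qsem P1 rho1) B (qsem P2 rho2).
End Validity.
End Quantum.

(* Main.v *)
Require Import Defs.
From mathcomp Require Import all_boot all_order all_algebra.
From mathcomp Require Import complex.
From mathcomp Require Import reals.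
From HB Require Import structures.
From mathcomp Require Import boolp.
From mathcomp Require Import ring lra.
Set Implicit Arguments. Unset Strict Implicit. Unset Printing Implicit Defensive.
Import Order.TTheory GRing.Theory Num.Theory.
Local Open Scope ring_scope.
Local Open Scope complex_scope.


Section Gen.
Variable R : realType.
Local Notation C := (R[i]).

Lemma sum_delta (S : finType) (F : S -> C) s : \sum_t F t * (t == s)%:R = F s.
Proof.
rewrite (bigD1 s) //= eqxx mulr1 big1 ?addr0 // => t /negbTE ->; by rewrite mulr0.
Qed.

Lemma sum_delta' (S : finType) (F : S -> C) s : \sum_t (s == t)%:R * F t = F s.
Proof.
rewrite (bigD1 s) //= eqxx mul1r big1 ?addr0 // => t; rewrite eq_sym => /negbTE ->; by rewrite mul0r.
Qed.

Lemma psd_diag (S : finType) (A : op R S) s : psd A -> 0 <= A s s.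
Proof.
move=> /(_ (fun u => (u == s)%:R)); rewrite /opapp.
under eq_bigr do rewrite sum_delta.
rewrite (bigD1 s) //= eqxx big1 ?addr0 ?conjc1 ?mul1r // => t /negbTE ->.
by rewrite conjc0 mul0r.
Qed.

Lemma psd2 (S : finType) (A : op R S) s t : psd A -> s != t -> forall a b : C,
  0 <= a^*%C * (A s s * a + A s t * b) + b^*%C * (A t s * a + A t t * b).
Proof.
move=> H st a b; move: (H (fun u => (u == s)%:R * a + (u == t)%:R * b)); rewrite /opapp.
have E : forall u, \sum_t0 A u t0 * ((t0 == s)%:R * a + (t0 == t)%:R * b) = A u s * a + A u t * b.
  move=> u; rewrite -(sum_delta (fun t0 => A u t0 * a) s) -(sum_delta (fun t0 => A u t0 * b) t).
  rewrite -big_split /=; apply: eq_bigr => i _; ring.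
under eq_bigr do rewrite E.
rewrite (bigD1 s) //= (bigD1 t) 1?eq_sym //= big1 ?addr0; last first.
  move=> u /andP[/negbTE -> /negbTE ->]; by rewrite mul0r add0r mul0r conjc0 mul0r.
rewrite eqxx eq_sym (negbTE st) eqxx !rmorphD !rmorphM !rmorph_nat.
by rewrite !mul1r !mul0r !addr0 !add0r.
Qed.


Lemma psd_herm (S : finType) (A : op R S) s t : psd A -> A s t = (A t s)^*%C.
Proof.
move=> H; have [<-|st] := eqVneq s t.
  move: (psd_diag s H); case: (A s s) => a b; rewrite lecE /= => /andP[/eqP b0 _].
  by rewrite b0 oppr0.
move: (psd2 H st 1 1) (psd2 H st 1 'i%C) (psd_diag s H) (psd_diag t H).
case: (A s s) => [p1 p2]; case: (A s t) => [x1 x2]; case: (A t s) => [y1 y2]; case: (A t t) => [q1 q2].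
rewrite !lecE /=; simpc; rewrite /=.
move=> /andP[/eqP e1 _] /andP[/eqP e2 _] /andP[/eqP e3 _] /andP[/eqP e4 _]; congr Complex; lra.
Qed.


Lemma psd_cs (S : finType) (A : op R S) s t : psd A -> s != t ->
  (complex.Re (A s t))^+2 + (complex.Im (A s t))^+2 <= complex.Re (A s s) * complex.Re (A t t).
Proof.
move=> H st.
have Hq : forall al be : R, 0 <= (al%:C)^*%C * (A s s * al%:C + A s t * (- be%:C * A t s))
     + (- be%:C * A t s)^*%C * (A t s * al%:C + A t t * (- be%:C * A t s)) by move=> al be; apply: psd2.
move: Hq (psd_diag s H) (psd_diag t H); rewrite (psd_herm t s H).
case: (A s s) => [p1 p2]; case: (A s t) => [x1 x2]; case: (A t t) => [q1 q2] /=.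
rewrite !lecE /= => Hq /andP[/eqP e1 hp] /andP[/eqP e2 hq].
move: (Hq (q1+1) 1) (Hq (x1^+2 + x2^+2) p1).
rewrite /= !lecE /=; simpc; rewrite /= e1 e2.
move=> /andP[_ h1] /andP[_ h2].
set m := x1^+2 + x2^+2.
have m0 : 0 <= m by rewrite /m; nra.
have [p0|pp] := eqVneq p1 0.
  subst p1; have : m * (q1 + 2) <= 0 by rewrite /m; nra.
  nra.
have pp' : 0 < p1 by rewrite lt_def pp hp.
have : 0 <= p1 * (m * (p1 * q1 - m)) by rewrite /m; nra.
rewrite pmulr_rge0 // => h.
have [m00|mp] := eqVneq m 0; first by rewrite -/m m00; nra.
have mp' : 0 < m by rewrite lt_def mp m0.
move: h; rewrite pmulr_rge0 // -/m; lra.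
Qed.


Lemma sum_pair (V : nmodType) (S1 S2 : finType) (F : prod S1 S2 -> V) :
  \sum_p F p = \sum_a \sum_b F (a, b).
Proof. by rewrite pair_big; apply: eq_bigr => -[a b]. Qed.

Lemma optr_ptr2 (S1 S2 : finType) (r : op R (prod S1 S2)) : optr (ptr2 r) = optr r.
Proof. by rewrite /optr /ptr2 sum_pair. Qed.

Lemma optr_ptr1 (S1 S2 : finType) (r : op R (prod S1 S2)) : optr (ptr1 r) = optr r.
Proof. by rewrite /optr /ptr1 sum_pair exchange_big. Qed.

Lemma opapp_delta (S : finType) (A : op R S) q p : opapp A (fun u => (u == q)%:R) p = A p q.
Proof. by rewrite /opapp sum_delta. Qed.

End Gen.

Definition d1 : 'I_1 -> nat := fun _ => 1%N.
Definition qb := st d1.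
Definition sb (k : 'I_2) : qb := @finfun 'I_1 (fun i => 'I_(d1 i).+1) (fun _ => k).
Definition q0sig : {s : qb | s = sb ord0}. Proof. by exists (sb ord0). Qed.
Definition q1sig : {s : qb | s = sb ord_max}. Proof. by exists (sb ord_max). Qed.
Definition q0 := proj1_sig q0sig.
Definition q1 := proj1_sig q1sig.
Lemma q0E : q0 = sb ord0. Proof. exact: proj2_sig q0sig. Qed.
Lemma q1E : q1 = sb ord_max. Proof. exact: proj2_sig q1sig. Qed.
Lemma q00 : (q0 == q0) = true. Proof. exact: eqxx. Qed.
Lemma q11 : (q1 == q1) = true. Proof. exact: eqxx. Qed.

Lemma sbK : cancel sb (fun s : qb => (s ord0 : 'I_2)).
Proof. by move=> k; rewrite /sb ffunE. Qed.
Lemma sbK' : cancel (fun s : qb => (s ord0 : 'I_2)) sb.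
Proof. by move=> s; apply/ffunP => i; rewrite /sb ffunE (ord1 i). Qed.

Lemma sum_qb (V : nmodType) (F : qb -> V) : \sum_s F s = F q0 + F q1.
Proof.
rewrite (reindex sb) /=; last by exists (fun s : qb => (s ord0 : 'I_2)) => x _; [apply: sbK | apply: sbK'].
rewrite big_ord_recl big_ord1 q0E q1E; congr (_ + F (sb _)); exact: val_inj.
Qed.

Lemma q01 : (q0 == q1) = false.
Proof. by rewrite q0E q1E; apply/eqP => /(congr1 (fun s : qb => (s ord0 : nat))); rewrite /sb !ffunE. Qed.
Lemma q10 : (q1 == q0) = false.
Proof. by rewrite eq_sym q01. Qed.


Lemma aux2 (R : realType) (p q r s a b c d : R) : 0 <= p -> 0 <= q -> 0 <= r -> 0 <= s ->
  a^+2 + b^+2 <= p * q -> c^+2 + d^+2 <= r * s -> 2 * (a * c - b * d) <= p * s + q * r.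
Proof.
move=> hp hq hr hs h1 h2.
have h3 : (a * c - b * d)^+2 <= (p * q) * (r * s).
  have e : (a * c - b * d)^+2 + (a * d + b * c)^+2 = (a^+2 + b^+2) * (c^+2 + d^+2) by ring.
  have h4 : (a^+2 + b^+2) * (c^+2 + d^+2) <= (p * q) * (r * s).
    apply: ler_pM => //; nra.
  apply: le_trans h4; rewrite -e lerDl; exact: sqr_ge0.
have hu : 0 <= p * s + q * r by rewrite addr_ge0 // mulr_ge0.
have h7 : (2 * (a * c - b * d))^+2 <= (p * s + q * r)^+2.
  have -> : (2 * (a * c - b * d))^+2 = 4 * (a * c - b * d)^+2 by ring.
  have -> : (p * s + q * r)^+2 = (p * s - q * r)^+2 + 4 * ((p * q) * (r * s)) by ring.
  apply: (le_trans (ler_wpM2l _ h3)) => //; rewrite lerDr; exact: sqr_ge0.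
case: (lerP (2 * (a * c - b * d)) (p * s + q * r)) => // hlt.
have : (p * s + q * r)^+2 < (2 * (a * c - b * d))^+2.
  rewrite ltr_pXn2r ?qualifE //; rewrite /Num.Def.nneg_num_pred /=; lra.
move=> H; have := lt_le_trans H h7; by rewrite ltxx.
Qed.

Section Core.
Variable R : realType.
Local Notation C := (R[i]).

Lemma ReD (x y : C) : complex.Re (x + y) = complex.Re x + complex.Re y. Proof. by case: x; case: y. Qed.
Lemma ImD (x y : C) : complex.Im (x + y) = complex.Im x + complex.Im y. Proof. by case: x; case: y. Qed.
Lemma ReM (x y : C) : complex.Re (x * y) = complex.Re x * complex.Re y - complex.Im x * complex.Im y.
Proof. by case: x; case: y. Qed.
Lemma ImM (x y : C) : complex.Im (x * y) = complex.Re x * complex.Im y + complex.Im x * complex.Re y.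
Proof. by case: x => a b; case: y => c d /=; ring. Qed.
Lemma ReJ (x : C) : complex.Re (x^*) = complex.Re x. Proof. by case: x. Qed.
Lemma ImJ (x : C) : complex.Im (x^*) = - complex.Im x. Proof. by case: x. Qed.
Lemma ReC (r : R) : complex.Re (r%:C) = r. Proof. by []. Qed.
Lemma ImC (r : R) : complex.Im (r%:C) = 0. Proof. by []. Qed.
Lemma Re0 : complex.Re (0 : C) = 0. Proof. by []. Qed.
Lemma Im0 : complex.Im (0 : C) = 0. Proof. by []. Qed.

Definition CE := (ReD, ImD, ReM, ImM, ReJ, ImJ, ReC, ImC, Re0, Im0).

Lemma sum4 (V : nmodType) (F : prod qb qb -> V) :
  \sum_p F p = F (q0, q0) + F (q0, q1) + F (q1, q0) + F (q1, q1).
Proof. by rewrite sum_pair !sum_qb addrA. Qed.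

Definition Aphi : op R (prod qb qb) :=
  fun p q => (((p.1 == p.2) && (q.1 == q.2))%:R / 2 : R)%:C.
Definition Bhalf : op R (prod qb qb) := fun p q => ((p == q)%:R / 2 : R)%:C.

Lemma AphiE a b c d : Aphi (a, b) (c, d) = (((a == b) && (c == d))%:R / 2 : R)%:C. Proof. by []. Qed.
Lemma BhalfE a b c d : Bhalf (a, b) (c, d) = (((a == c) && (b == d))%:R / 2 : R)%:C. Proof. by []. Qed.
Lemma optensorE (S1 S2 : finType) (X : op R S1) (Y : op R S2) a b c d :
  optensor X Y (a, b) (c, d) = X a c * Y b d. Proof. by []. Qed.
Lemma tb1 : (nat_of_bool true)%:R = 1 :> R. Proof. by []. Qed.
Lemma fb0 : (nat_of_bool false)%:R = 0 :> R. Proof. by []. Qed.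

Lemma core_term (X Y : op R qb) : psd X -> psd Y ->
  optr (opmul Aphi (optensor X Y)) <= optr (opmul Bhalf (optensor X Y)).
Proof.
move=> hX hY.
rewrite /optr sum4 /opmul !sum4 !AphiE !BhalfE !optensorE.
rewrite !q00.
rewrite !q11.
rewrite !q01 !q10.
rewrite ?andbT ?andbF ?andFb ?andTb ?tb1 ?fb0.
rewrite (psd_herm q1 q0 hX) (psd_herm q1 q0 hY).
move: (psd_diag q0 hX) (psd_diag q1 hX) (psd_diag q0 hY) (psd_diag q1 hY).
move: (psd_cs hX (negbT q01)) (psd_cs hY (negbT q01)).
rewrite !lecE !ReD !ImD !ReM !ImM !ReJ !ImJ !ReC !ImC.
move=> hx hy /andP[/eqP ex0 px0] /andP[/eqP ex1 px1] /andP[/eqP ey0 py0] /andP[/eqP ey1 py1].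
rewrite ex0 ex1 ey0 ey1.
apply/andP; split; first by apply/eqP; ring.
have := aux2 px0 px1 py0 py1 hx hy.
lra.
Qed.
End Core.


Section More.
Variable R : realType.
Local Notation C := (R[i]).
Local Notation Aphi := (Aphi R).
Local Notation Bhalf := (Bhalf R).

Lemma conjM (x y : C) : (x * y)^*%C = x^*%C * y^*%C. Proof. exact: rmorphM. Qed.
Lemma conjD (x y : C) : (x + y)^*%C = x^*%C + y^*%C. Proof. exact: rmorphD. Qed.
Lemma conj_sum (S : finType) (F : S -> C) : (\sum_s F s)^*%C = \sum_s (F s)^*%C. Proof. exact: rmorph_sum. Qed.

Lemma optr_sum (M : op R (prod qb qb)) (l : seq (op R qb * op R qb)) :
  optr (opmul M (fun p q => \sum_(x <- l) optensor x.1 x.2 p q)) =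
  \sum_(x <- l) optr (opmul M (optensor x.1 x.2)).
Proof.
rewrite /optr /opmul.
under eq_bigr do under eq_bigr do rewrite big_distrr.
under eq_bigr do rewrite exchange_big.
by rewrite exchange_big.
Qed.

Lemma sep_ineq (rho : op R (prod qb qb)) : separable rho ->
  optr (opmul Aphi rho) <= optr (opmul Bhalf rho).
Proof.
case=> l [hl ->]; rewrite !optr_sum big_seq [X in _ <= X]big_seq.
apply: ler_sum => x /hl [h1 h2]; exact: core_term.
Qed.

Lemma psd_ext (S : finType) (A B : op R S) : (forall s t, A s t = B s t) -> psd A -> psd B.
Proof. by move=> e; have -> : B = A by apply/funext => s; apply/funext => t; rewrite e. Qed.

Lemma psd_diagf (S : finType) (f : S -> C) : (forall s, 0 <= f s) ->
  psd (fun p q => (p == q)%:R * f p).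
Proof.
move=> hf v; rewrite /opapp.
have E : forall s, \sum_t (s == t)%:R * f s * v t = f s * v s.
  by move=> s; rewrite -(sum_delta' (fun t => f s * v t)); apply: eq_bigr => t _; rewrite mulrA.
under eq_bigr do rewrite E.
apply: sumr_ge0 => s _; rewrite mulrCA; apply: mulr_ge0 => //.
by rewrite mulrC mulcJ_ge0.
Qed.

Lemma psd_rank1 (S : finType) (c : R) (f : S -> R) : 0 <= c ->
  psd (fun p q => (c * (f p * f q))%:C).
Proof.
move=> hc v; rewrite /opapp.
have E : forall s, \sum_t (c * (f s * f t))%:C * v t = (c * f s)%:C * \sum_t (f t)%:C * v t.
  move=> s; rewrite big_distrr; apply: eq_bigr => t _; rewrite !rmorphM /=; ring.
under eq_bigr do rewrite E.
set W := \sum_t (f t)%:C * v t.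
have -> : \sum_s (v s)^*%C * ((c * f s)%:C * W) = c%:C * ((\sum_s ((f s)%:C * v s)^*%C) * W).
  rewrite big_distrl big_distrr /=; apply: eq_bigr => s _.
  by rewrite conjM conjc_real; ring.
rewrite -conj_sum (mulrC _ W); apply: mulr_ge0; [by rewrite lecR | exact: mulcJ_ge0].
Qed.

End More.

Lemma qb_cases (s : qb) : s = q0 \/ s = q1.
Proof.
rewrite q0E q1E -(sbK' s); move: (s ord0 : 'I_2) => [[|[|m]] hm].
- by left; congr sb; exact: val_inj.
- by right; congr sb; exact: val_inj.
- by [].
Qed.

Section More2.
Variable R : realType.
Local Notation C := (R[i]).
Local Notation Aphi := (Aphi R).
Local Notation Bhalf := (Bhalf R).

Lemma CM (x y : R) : (x * y)%:C = x%:C * y%:C :> C. Proof. exact: rmorphM. Qed.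
Lemma CD (x y : R) : (x + y)%:C = x%:C + y%:C :> C. Proof. exact: rmorphD. Qed.
Lemma CB (x y : R) : (x - y)%:C = x%:C - y%:C :> C. Proof. exact: rmorphB. Qed.
Lemma natC n : (n%:R : C) = ((n%:R : R)%:C). Proof. by rewrite rmorph_nat. Qed.

Lemma Aphi_herm : Defs.hermitian Aphi.
Proof. by move=> [a b] [c d]; rewrite !AphiE conjc_real andbC. Qed.

Lemma Aphi_mul : opmul Aphi Aphi = Aphi.
Proof.
apply/funext => -[a b]; apply/funext => -[c d].
rewrite /opmul sum4 !AphiE !q00 !q11 !q01 !q10 -!CM -!CD; congr (_%:C).
case: (a == b); case: (c == d); rewrite /=; lra.
Qed.

Lemma Aphi_psd : psd Aphi.
Proof.
apply: (psd_ext _ (psd_rank1 (c := 1/2) (fun p : prod qb qb => (p.1 == p.2)%:R) _)); last lra.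
move=> [a b] [c d]; rewrite AphiE /=; congr (_%:C).
case: (a == b); case: (c == d); rewrite /=; lra.
Qed.


Lemma psd_add (S : finType) (A B : op R S) : psd A -> psd B -> psd (fun p q => A p q + B p q).
Proof.
move=> hA hB v; have := addr_ge0 (hA v) (hB v); rewrite -big_split /=.
congr (_ <= _); apply: eq_bigr => s _; rewrite -mulrDr -big_split /=; congr (_ * _).
by apply: eq_bigr => t _; rewrite mulrDl.
Qed.

Definition gm (p : prod qb qb) : R := (p == (q0, q0))%:R - (p == (q1, q1))%:R.

Lemma Aphi_le1 : psd (opsub (@opid R _) Aphi).
Proof.
have h1 : psd (fun p q : prod qb qb => ((1/2) * (gm p * gm q))%:C) by apply: psd_rank1; lra.
have h2 : psd (fun p q : prod qb qb => (p == q)%:R * ((p.1 != p.2)%:R : R)%:C).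
  by apply: psd_diagf => p; rewrite lecR.
apply: (psd_ext _ (psd_add h1 h2)).
move=> [a b] [c d]; rewrite /opsub /opid AphiE /gm.
case: (qb_cases a) => ->; case: (qb_cases b) => ->; case: (qb_cases c) => ->; case: (qb_cases d) => ->;
  rewrite ?xpair_eqE ?q00 ?q11 ?q01 ?q10 /= ?natC -?CM -?CB -?CD; congr (_%:C); lra.
Qed.

Lemma C1E : (1 : C) = (1 : R)%:C. Proof. by []. Qed.
Lemma C0E : (0 : C) = (0 : R)%:C. Proof. by []. Qed.

Lemma psd_sub0 (S : finType) (A : op R S) : psd A -> psd (opsub A (@op0 R _)).
Proof. by apply: psd_ext => s t; rewrite /opsub /op0 subr0. Qed.

Lemma Bhalf_herm : Defs.hermitian Bhalf.
Proof. by move=> p q; rewrite /Bhalf conjc_real eq_sym. Qed.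

Lemma Bhalf_psd : psd Bhalf.
Proof.
have h : psd (fun p q : prod qb qb => (p == q)%:R * ((1/2 : R))%:C) by apply: psd_diagf => _; rewrite lecR; lra.
apply: (psd_ext _ h).
move=> p q; rewrite /Bhalf natC -CM; congr (_%:C); case: (p == q); rewrite /=; lra.
Qed.

Lemma Bhalf_le1 : psd (opsub (@opid R _) Bhalf).
Proof.
have h : psd (fun p q : prod qb qb => (p == q)%:R * ((1/2 : R))%:C) by apply: psd_diagf => _; rewrite lecR; lra.
apply: (psd_ext _ h).
move=> p q; rewrite /Bhalf /opsub /opid !natC -CM -CB; congr (_%:C); case: (p == q); rewrite /=; lra.
Qed.

Lemma tr_Bhalf (rho : op R (prod qb qb)) : optr (opmul Bhalf rho) = optr rho * (1/2 : R)%:C.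
Proof.
rewrite /optr /opmul big_distrl; apply: eq_bigr => p _.
rewrite [RHS]mulrC -(sum_delta' (fun q => (1/2 : R)%:C * rho q p)); apply: eq_bigr => q _.
rewrite /Bhalf natC mulrA -CM; congr (_%:C * _); lra.
Qed.

Lemma tr_Aphi : optr Aphi = 1.
Proof.
rewrite /optr sum4 !AphiE ?q00 ?q11 ?q01 ?q10 /= -!CD C1E; congr (_%:C); lra.
Qed.

Lemma phi_struct (sigma : op R (prod qb qb)) : psd sigma -> supp_in sigma Aphi ->
  exists c : C, (0 <= c) /\ (ptr2 sigma = (fun s t => (s == t)%:R * c)) /\
    (ptr1 sigma = (fun s t => (s == t)%:R * c)).
Proof.
move=> hs hsupp.
pose cc q := \sum_r (((r.1 == r.2)%:R / 2 : R)%:C) * sigma r q.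
have F1 : forall a b q, sigma (a, b) q = (a == b)%:R * cc q.
  move=> a b q; have H := congr1 (fun w => w (a, b)) (hsupp (fun u : prod qb qb => (u == q)%:R)).
  have e1 : sigma (a, b) q = opapp Aphi (fun p => sigma p q) (a, b).
    transitivity (opapp sigma (fun u : prod qb qb => (u == q)%:R) (a, b)); first by symmetry; apply: opapp_delta.
    rewrite /= in H; rewrite -H; congr (opapp _ _ _); apply/funext => p; apply: opapp_delta.
  rewrite e1 /opapp; rewrite /cc big_distrr; apply: eq_bigr => -[r1 r2] _.
  rewrite AphiE /= natC mulrA -CM; congr (_%:C * _).
  by case: (a == b); rewrite /=; lra.
have H : forall s t, sigma s t = (sigma t s)^*%C by move=> s t; apply: psd_herm.
pose c := sigma (q0, q0) (q0, q0).
have creal : c^*%C = c by rewrite /c -H.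
have Cc : forall a b, cc (a, b) = (a == b)%:R * c.
  move=> a b; have [<-|ab] := eqVneq a b.
  - change (cc (a, a) = 1 * c); rewrite mul1r.
    have e1 : cc (a, a) = sigma (q0, q0) (a, a) by rewrite F1 eqxx mul1r.
    have e2 : c = cc (q0, q0) by rewrite /c F1 eqxx mul1r.
    by rewrite e1 H F1 eqxx mul1r -e2 creal.
  - change (cc (a, b) = 0 * c); rewrite mul0r.
    have e1 : cc (a, b) = sigma (b, b) (a, b) by rewrite F1 eqxx mul1r.
    by rewrite e1 H F1 (negbTE ab) mul0r conjc0.
exists c; split; first exact: psd_diag.
split; apply/funext => s; apply/funext => t; rewrite /ptr2 /ptr1.
- under eq_bigr do rewrite F1.
  by rewrite sum_delta' Cc eq_sym.
- under eq_bigr do rewrite F1 mulrC.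
  by rewrite sum_delta Cc.
Qed.
End More2.

Definition Pskip (R : realType) : qprog R := @QProg R 1%N d1 (PSkip R d1) I.

Definition Preset (R : realType) : qprog R := @QProg R 1%N d1 (PInit R d1 ord0) I.

Lemma sb_eq (s : qb) k : (s == sb k) = (s ord0 == k).
Proof. by apply/eqP/eqP => [->|<-]; [rewrite sbK | rewrite sbK']. Qed.

Lemma sum_sb (V : nmodType) (F : qb -> V) : \sum_(i < 2) F (sb i) = \sum_s F s.
Proof. rewrite sum_qb big_ord_recl big_ord1 q0E q1E; congr (_ + F (sb _)); exact: val_inj. Qed.

Section Parts.
Variable R : realType.
Local Notation C := (R[i]).
Local Notation Aphi := (Aphi R).
Local Notation Bhalf := (Bhalf R).

Lemma qpred_Aphi : qpredicate Aphi.
Proof. split; first exact: Aphi_herm. split; [apply: psd_sub0; exact: Aphi_psd | exact: Aphi_le1]. Qed.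

Lemma qpred_Bhalf : qpredicate Bhalf.
Proof. split; first exact: Bhalf_herm. split; [apply: psd_sub0; exact: Bhalf_psd | exact: Bhalf_le1]. Qed.

Lemma part4 : exists (P1 P2 : qprog R) (A B : op R (prod (qstate P1) (qstate P2))),
      qpredicate A /\ qpredicate B /\ svalid A B /\ ~ valid A B.
Proof.
exists (Pskip R), (Pskip R), Aphi, Bhalf.
split; first exact: qpred_Aphi. split; first exact: qpred_Bhalf.
split.
- move=> rho [hps htr] hsep; exists rho; split; first by split; [exact: hps | split].
  by rewrite addrK; exact: sep_ineq.
- move=> H.
  have pd : pdensity Aphi by split; [exact: Aphi_psd | rewrite tr_Aphi].
  have [sig [[hs [h2 h1]] hineq]] := H Aphi pd.
  change (ptr2 sig = ptr2 Aphi) in h2.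
  have ts : optr sig = 1 by rewrite -optr_ptr2 h2 optr_ptr2 tr_Aphi.
  move: hineq; rewrite Aphi_mul tr_Aphi tr_Bhalf ts addrK mul1r C1E lecR; lra.
Qed.


Definition Bdiag : op R (prod qb qb) := fun p q => ((p == q) && (p.1 != p.2))%:R.

Lemma natb_and (a b : bool) : ((a && b)%:R : C) = a%:R * b%:R.
Proof. by case: a; case: b; rewrite /= ?mul1r ?mul0r. Qed.

Lemma BdiagE p q : Bdiag p q = (p == q)%:R * (p.1 != p.2)%:R.
Proof. by rewrite /Bdiag; case: (p == q); case: (p.1 != p.2); rewrite /= ?mul1r ?mul0r. Qed.

Lemma Bdiag_proj : projection Bdiag.
Proof.
split.
- move=> p q; rewrite /Bdiag conjc_nat; have [->|pq] := eqVneq p q; by [].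
- apply/funext => p; apply/funext => q; rewrite /opmul.
  under eq_bigr do rewrite !BdiagE -mulrA.
  rewrite sum_delta' BdiagE; case: (p.1 != p.2); case: (p == q); rewrite /= ?mul1r ?mul0r ?mulr1 ?mulr0 //.
Qed.

Lemma Aphi_proj : projection Aphi.
Proof. split; [exact: Aphi_herm | exact: Aphi_mul]. Qed.

Lemma part1_pvalid : pvalid (P1 := Pskip R) (P2 := Pskip R) Aphi Bdiag.
Proof.
move=> r1 r2 _ _ [sig [[hs [h2 h1]] hsupp]].
change (ptr2 sig = r1) in h2; change (ptr1 sig = r2) in h1.
have [c [c0 [e2 e1]]] := phi_struct hs hsupp.
exists (fun p q => (p == q)%:R * ((p.1 != p.2)%:R * c)); split; [split; [|split] |].
- by apply: psd_diagf => p; apply: mulr_ge0 => //; rewrite ler0n.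
- change (ptr2 (fun p q => (p == q)%:R * ((p.1 != p.2)%:R * c)) = r1); rewrite -h2 e2.
  apply/funext => s; apply/funext => t; rewrite /ptr2 sum_qb.
  case: (qb_cases s) => ->; case: (qb_cases t) => ->;
    rewrite /= ?xpair_eqE ?q00 ?q11 ?q01 ?q10 /=; ring.
- change (ptr1 (fun p q => (p == q)%:R * ((p.1 != p.2)%:R * c)) = r2); rewrite -h1 e1.
  apply/funext => s; apply/funext => t; rewrite /ptr1 sum_qb.
  case: (qb_cases s) => ->; case: (qb_cases t) => ->;
    rewrite /= ?xpair_eqE ?q00 ?q11 ?q01 ?q10 /=; ring.
- move=> v; apply/funext => p.
  have Wq : forall q, opapp (fun p q => (p == q)%:R * ((p.1 != p.2)%:R * c)) v q =
                      (q.1 != q.2)%:R * c * v q.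
    move=> q; rewrite /opapp -(sum_delta' (fun t => (t.1 != t.2)%:R * c * v t)).
    by apply: eq_bigr => t _; have [->|] := eqVneq q t; rewrite ?mul1r ?mul0r ?mulrA.
  rewrite Wq {1}/opapp.
  under eq_bigr do rewrite Wq BdiagE -mulrA.
  rewrite sum_delta'; case: (p.1 != p.2); rewrite /= ?mul1r ?mul0r //.
Qed.


Definition rho0 : op R (prod qb qb) := fun p q => (p == q)%:R * ((p == (q0, q0))%:R : C).
Definition E0 : op R qb := fun s t => (s == t)%:R * ((s == q0)%:R : C).

Lemma tr_rho0 : optr rho0 = 1.
Proof. rewrite /optr sum4 /rho0 ?xpair_eqE ?q00 ?q01 ?q10 ?q11 /=; ring. Qed.

Lemma trA_rho0 : optr (opmul Aphi rho0) = (1/2 : R)%:C.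
Proof.
rewrite /optr sum4 /opmul !sum4 !AphiE /rho0 ?xpair_eqE ?q00 ?q01 ?q10 ?q11 /= !natC -!CM -!CD.
congr (_%:C); lra.
Qed.

Lemma pd_rho0 : pdensity rho0.
Proof. split; [by apply: psd_diagf => p; rewrite ler0n | by rewrite tr_rho0]. Qed.

Lemma sep_rho0 : separable rho0.
Proof.
exists [:: (E0, E0)]; split.
  by move=> x; rewrite inE => /eqP -> /=; split; apply: psd_diagf => s; rewrite ler0n.
apply/funext => -[a b]; apply/funext => -[c d]; rewrite big_seq1 /optensor /= /rho0 /E0.
rewrite !xpair_eqE !natb_and; ring.
Qed.

Lemma part1_nsvalid : ~ svalid (P1 := Pskip R) (P2 := Pskip R) Aphi Bdiag.
Proof.
move=> H; have [sig [[hs [h2 h1]] hineq]] := H rho0 pd_rho0 sep_rho0.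
change (ptr2 sig = ptr2 rho0) in h2; change (ptr1 sig = ptr1 rho0) in h1.
have ts : optr sig = 1 by rewrite -optr_ptr2 h2 optr_ptr2 tr_rho0.
have z1 : sig (q1, q0) (q1, q0) = 0 /\ sig (q1, q1) (q1, q1) = 0.
  have := congr1 (fun f => f q1 q1) h2; rewrite /ptr2 /= !sum_qb /rho0 ?xpair_eqE ?q00 ?q01 ?q10 ?q11 /= => e.
  have e' : sig (q1, q0) (q1, q0) + sig (q1, q1) (q1, q1) = 0 by rewrite e; ring.
  by move/eqP: e'; rewrite paddr_eq0 ?(psd_diag _ hs) // => /andP[/eqP -> /eqP ->].
have z2 : sig (q0, q1) (q0, q1) = 0.
  have := congr1 (fun f => f q1 q1) h1; rewrite /ptr1 /= !sum_qb /rho0 ?xpair_eqE ?q00 ?q01 ?q10 ?q11 /= => e.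
  have e' : sig (q0, q1) (q0, q1) + sig (q1, q1) (q1, q1) = 0 by rewrite e; ring.
  by move/eqP: e'; rewrite paddr_eq0 ?(psd_diag _ hs) // => /andP[/eqP -> _].
have tB : optr (opmul Bdiag sig) = 0.
  rewrite /optr sum4 /opmul !sum4 !BdiagE ?xpair_eqE ?q00 ?q01 ?q10 ?q11 /=.
  case: z1 => -> _; rewrite z2; ring.
move: hineq; rewrite trA_rho0 tB ts tr_rho0 add0r subrr C0E lecR; lra.
Qed.


Lemma resetKE (i : 'I_2) (s t : qb) : @resetK R 1%N d1 ord0 i s t = ((s == q0) && (t == sb i))%:R.
Proof.
rewrite /resetK.
have -> : [forall j, (j != ord0) ==> (s j == t j)] = true by apply/forallP => j; rewrite (ord1 j) eqxx.
by rewrite q0E !sb_eq.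
Qed.

Lemma reset_sem (rho : op R qb) : @qsem R (Preset R) rho = fun s t => ((s == q0) && (t == q0))%:R * optr rho.
Proof.
apply/funext => s; apply/funext => t.
change (\sum_(i < 2) sandwich (@resetK R 1%N d1 ord0 i) rho s t = ((s == q0) && (t == q0))%:R * optr rho).
rewrite /optr -sum_sb mulr_sumr; apply: eq_bigr => i _.
rewrite /sandwich /opmul /opadj.
under eq_bigr do under eq_bigr do rewrite resetKE natb_and -mulrA.
have dl : forall (F : qb -> C) (x : qb), \sum_u (u == x)%:R * F u = F x.
  by move=> F x; rewrite -(sum_delta' F x); apply: eq_bigr => u _; rewrite eq_sym.
under eq_bigr do rewrite -mulr_sumr dl resetKE natb_and conjM !conjc_nat.
transitivity (\sum_u (s == q0)%:R * rho (sb i) u * (t == q0)%:R * (u == sb i)%:R).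
  by apply: eq_bigr => u _; ring.
rewrite sum_delta /= natb_and; ring.
Qed.


Definition Bplus : op R (prod qb qb) := fun p q => (((p.1 == q0) && (q.1 == q0))%:R / 2 : R)%:C.
Lemma BplusE a b c d : Bplus (a, b) (c, d) = (((a == q0) && (c == q0))%:R / 2 : R)%:C. Proof. by []. Qed.

Lemma Bplus_proj : projection Bplus.
Proof.
split; first by move=> p q; rewrite /Bplus conjc_real andbC.
apply/funext => -[a b]; apply/funext => -[c d].
rewrite /opmul sum4 !BplusE ?q00 ?q11 ?q01 ?q10 -!CM -!CD; congr (_%:C).
case: (a == q0); case: (c == q0); rewrite /=; lra.
Qed.

Lemma opapp_mul (S : finType) (A B : op R S) v : opapp A (opapp B v) = opapp (opmul A B) v.
Proof.
apply/funext => p; rewrite /opapp /opmul.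
under eq_bigr do rewrite mulr_sumr.
rewrite exchange_big; apply: eq_bigr => t _; rewrite mulr_suml; apply: eq_bigr => u _; ring.
Qed.

Lemma supp_col (sig M : op R (prod qb qb)) : supp_in sig M ->
  forall p q, sig p q = opapp M (fun r => sig r q) p.
Proof.
move=> hsupp p q; have H := congr1 (fun w => w p) (hsupp (fun u : prod qb qb => (u == q)%:R)).
transitivity (opapp sig (fun u : prod qb qb => (u == q)%:R) p); first by symmetry; apply: opapp_delta.
rewrite /= in H; rewrite -H; congr (opapp _ _ _); apply/funext => r; apply: opapp_delta.
Qed.

Lemma optr_ge0 (S : finType) (rho : op R S) : psd rho -> 0 <= optr rho.
Proof. by move=> h; apply: sumr_ge0 => s _; apply: psd_diag. Qed.

Lemma part2_svalid : svalid (P1 := Preset R) (P2 := Preset R) Aphi Bplus.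
Proof.
move=> rho [hps htr] hsep.
have t0 := optr_ge0 hps.
exists (fun p q => (p == q)%:R * ((p == (q0, q0))%:R * optr rho)); split; [split; [|split] |].
- by apply: psd_diagf => p; apply: mulr_ge0 => //; rewrite ler0n.
- rewrite reset_sem optr_ptr2; apply/funext => s; apply/funext => t; rewrite /ptr2 sum_qb.
  case: (qb_cases s) => ->; case: (qb_cases t) => ->;
    rewrite /= ?xpair_eqE ?q00 ?q11 ?q01 ?q10 /=; ring.
- rewrite reset_sem optr_ptr1; apply/funext => s; apply/funext => t; rewrite /ptr1 sum_qb.
  case: (qb_cases s) => ->; case: (qb_cases t) => ->;
    rewrite /= ?xpair_eqE ?q00 ?q11 ?q01 ?q10 /=; ring.
- have -> : optr (fun p q => (p == q)%:R * ((p == (q0, q0))%:R * optr rho)) = optr rho.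
    rewrite /optr sum4 ?xpair_eqE ?q00 ?q11 ?q01 ?q10 /= -/(optr rho); ring.
  have -> : optr (opmul Bplus (fun p q => (p == q)%:R * ((p == (q0, q0))%:R * optr rho))) =
            optr rho * (1/2 : R)%:C.
    rewrite {1}/optr sum4 /opmul !sum4 !BplusE ?xpair_eqE ?q00 ?q11 ?q01 ?q10 /= -/(optr rho) !natC.
    rewrite ?mul0r -?C1E -?C0E; ring.
  by rewrite addrK -tr_Bhalf; apply: sep_ineq.
Qed.


Definition Ih : op R qb := fun s t => (s == t)%:R * ((1/2 : R)%:C).

Lemma tr_Ih : optr Ih = 1.
Proof. rewrite /optr sum_qb /Ih q00 q11 /= !mul1r -CD C1E; congr (_%:C); lra. Qed.

Lemma pd_Ih : pdensity Ih.
Proof. split; [by apply: psd_diagf => _; rewrite lecR; lra | by rewrite tr_Ih]. Qed.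

Lemma lift_Ih : lifting Ih Aphi Ih.
Proof.
exists Aphi; split; [split; [exact: Aphi_psd | split] |].
- apply/funext => s; apply/funext => t; rewrite /Ih /ptr2 sum_qb.
  case: (qb_cases s) => ->; case: (qb_cases t) => ->;
    rewrite !AphiE ?q00 ?q11 ?q01 ?q10 /= ?natC -?CM -?CD; congr (_%:C); lra.
- apply/funext => s; apply/funext => t; rewrite /Ih /ptr1 sum_qb.
  case: (qb_cases s) => ->; case: (qb_cases t) => ->;
    rewrite !AphiE ?q00 ?q11 ?q01 ?q10 /= ?natC -?CM -?CD; congr (_%:C); lra.
- by move=> v; rewrite opapp_mul Aphi_mul.
Qed.

Lemma part2_npvalid : ~ pvalid (P1 := Preset R) (P2 := Preset R) Aphi Bplus.
Proof.
move=> H; have [sig [[hs [h2 h1]] hsupp]] := H Ih Ih pd_Ih pd_Ih lift_Ih.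
rewrite reset_sem tr_Ih in h2 h1.
have col := supp_col hsupp.
have row : forall q, sig (q0, q0) q = sig (q0, q1) q.
  by move=> q; rewrite (col (q0, q0) q) (col (q0, q1) q).
have a : sig (q0, q1) (q0, q1) = 0.
  have := congr1 (fun f => f q1 q1) h1; rewrite /ptr1 /= sum_qb q10 /= => e.
  have e' : sig (q0, q1) (q0, q1) + sig (q1, q1) (q1, q1) = 0 by rewrite e; ring.
  by move/eqP: e'; rewrite paddr_eq0 ?(psd_diag _ hs) // => /andP[/eqP -> _].
have b : sig (q0, q0) (q0, q1) = 0 by rewrite row a.
have c : sig (q0, q0) (q0, q0) = 0 by rewrite row (psd_herm _ _ hs) b conjc0.
have := congr1 (fun f => f q0 q0) h2; rewrite /ptr2 /= sum_qb q00 /= c.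
by rewrite a addr0 mul1r => /eqP; rewrite eq_sym oner_eq0.
Qed.

Lemma part1 : exists (P1 P2 : qprog R) (A B : op R (prod (qstate P1) (qstate P2))),
      projection A /\ projection B /\ pvalid A B /\ ~ svalid A B.
Proof.
exists (Pskip R), (Pskip R), Aphi, Bdiag.
split; first exact: Aphi_proj. split; first exact: Bdiag_proj.
split; [exact: part1_pvalid | exact: part1_nsvalid].
Qed.

Lemma part2 : exists (P1 P2 : qprog R) (A B : op R (prod (qstate P1) (qstate P2))),
      projection A /\ projection B /\ svalid A B /\ ~ pvalid A B.
Proof.
exists (Preset R), (Preset R), Aphi, Bplus.
split; first exact: Aphi_proj. split; first exact: Bplus_proj.
split; [exact: part2_svalid | exact: part2_npvalid].
Qed.

Lemma part3 : forall (P1 P2 : qprog R) (A B : op R (prod (qstate P1) (qstate P2))),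
      qpredicate A -> qpredicate B -> valid A B -> svalid A B.
Proof. by move=> P1 P2 A B _ _ hv rho hp _; apply: hv. Qed.

End Parts.


Theorem propositionA15p2 (R : realType) :
  (exists (P1 P2 : qprog R) (A B : op R (prod (qstate P1) (qstate P2))),
      projection A /\ projection B /\ pvalid A B /\ ~ svalid A B) /\
  (exists (P1 P2 : qprog R) (A B : op R (prod (qstate P1) (qstate P2))),
      projection A /\ projection B /\ svalid A B /\ ~ pvalid A B) /\
  (forall (P1 P2 : qprog R) (A B : op R (prod (qstate P1) (qstate P2))),
      qpredicate A -> qpredicate B -> valid A B -> svalid A B) /\
  (exists (P1 P2 : qprog R) (A B : op R (prod (qstate P1) (qstate P2))),
      qpredicate A /\ qpredicate B /\ svalid A B /\ ~ valid A B).
Proof.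
split; first exact: part1.
split; first exact: part2.
split; first exact: part3.
exact: part4.
Qed.
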